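(* Let $V$ be a finite-dimensional vector space over $\mathbb{F}_q$ and $s_1,s_2,s_3$ transvections in $\mathrm{SL}(V)$. Then \[w(s_1,s_2,s_3)-w(s_1,s_3,s_2)=w(s_1,s_3)-w(s_1,s_2)w(s_2,s_3)-w(s_1^{s_2},s_3).\]
   Context: Transvections $s_i=1+u_i\otimes\phi_i$, i.e. $x\mapsto x+\phi_i(x)u_i$ with $\phi_i(u_i)=0$. For transvections $r_1,\dots,r_k$ ($k\ge2$), $w(r_1,\dots,r_k)=\prod_{i=1}^k\phi_{r_{i+1}}(u_{r_i})$ (indices mod $k$), which is independent of the chosen representations. $s^g=g^{-1}sg$. *)

(* Defs.v *)
From HB Require Import structures.
From mathcomp Require Import all_boot all_order all_algebra all_field.
Set Implicit Arguments. Unset Strict Implicit. Unset Printing Implicit Defensive.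
Import GRing.Theory.
Local Open Scope ring_scope.

(* V = 'cV[F]_n (column vectors), linear maps = square matrices acting on the
   left (x |-> A *m x), so matrix product is composition of maps.
   Linear functionals are row vectors phi, with phi(x) = (phi *m x) 0 0. *)

Definition ev (F : fieldType) (n : nat) (phi : 'rV[F]_n) (x : 'cV[F]_n) : F :=
  (phi *m x) 0 0.

Definition tv_rep (F : fieldType) (n : nat) (s : 'M[F]_n)
  (u : 'cV[F]_n) (phi : 'rV[F]_n) : Prop :=
  ev phi u = 0 /\ s = 1%:M + u *m phi.

Definition transvection (F : fieldType) (n : nat) (s : 'M[F]_n) : Prop :=
  s <> 1%:M /\ exists u phi, tv_rep s u phi.

Definition conjm (F : fieldType) (n : nat) (s g : 'M[F]_n) : 'M[F]_n :=
  invmx g *m s *m g.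

Definition w2 (F : fieldType) (n : nat) (u1 : 'cV[F]_n) (phi1 : 'rV[F]_n)
  (u2 : 'cV[F]_n) (phi2 : 'rV[F]_n) : F :=
  ev phi2 u1 * ev phi1 u2.

Definition w3 (F : fieldType) (n : nat) (u1 : 'cV[F]_n) (phi1 : 'rV[F]_n)
  (u2 : 'cV[F]_n) (phi2 : 'rV[F]_n) (u3 : 'cV[F]_n) (phi3 : 'rV[F]_n) : F :=
  ev phi2 u1 * ev phi3 u2 * ev phi1 u3.

(* Main.v *)
Require Import Defs.
From HB Require Import structures.
From mathcomp Require Import all_boot all_order all_algebra all_field.
From mathcomp Require Import ring.
Import GRing.Theory.
Local Open Scope ring_scope.

Lemma m11M (F : fieldType) (A B : 'M[F]_1) : (A *m B) 0 0 = A 0 0 * B 0 0.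
Proof. by rewrite mxE big_ord1. Qed.

Lemma m11D (F : fieldType) (A B : 'M[F]_1) : (A + B) 0 0 = A 0 0 + B 0 0.
Proof. by rewrite mxE. Qed.

Lemma m11B (F : fieldType) (A B : 'M[F]_1) : (A - B) 0 0 = A 0 0 - B 0 0.
Proof. by rewrite !mxE. Qed.

Theorem lemma4p11 (F : finFieldType) (n : nat) (s1 s2 s3 : 'M[F]_n)
  (u1 u2 u3 u12 : 'cV[F]_n) (phi1 phi2 phi3 phi12 : 'rV[F]_n) :
  transvection s1 -> transvection s2 -> transvection s3 ->
  tv_rep s1 u1 phi1 -> tv_rep s2 u2 phi2 -> tv_rep s3 u3 phi3 ->
  tv_rep (conjm s1 s2) u12 phi12 ->
  w3 u1 phi1 u2 phi2 u3 phi3 - w3 u1 phi1 u3 phi3 u2 phi2 =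
  w2 u1 phi1 u3 phi3 - w2 u1 phi1 u2 phi2 * w2 u2 phi2 u3 phi3
  - w2 u12 phi12 u3 phi3.
Proof.
move=> _ _ _ [h1 e1] [h2 e2] _ [h12 e12].
set T := 1%:M - u2 *m phi2.
have uu : u2 *m phi2 *m (u2 *m phi2) = 0.
  rewrite mulmxA -(mulmxA u2) (mx11_scalar (phi2 *m u2)).
  by rewrite -/(ev phi2 u2) h2 mul_mx_scalar scale0r mul0mx.
have sT : s2 *m T = 1%:M.
  by rewrite e2 /T mulmxBr mulmx1 mulmxDl mul1mx uu addr0 addrK.
have Ts : T *m s2 = 1%:M.
  by rewrite e2 /T mulmxDr mulmx1 mulmxBl mul1mx uu subr0 subrK.
have Hinv : invmx s2 = T.
  have [U _] := mulmx1_unit sT.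
  by rewrite -[invmx s2]mulmx1 -sT mulmxA mulVmx // mul1mx.
have Huf : u12 *m phi12 = T *m u1 *m (phi1 *m s2).
  move: e12; rewrite /conjm Hinv e1 mulmxDr mulmx1 mulmxDl Ts.
  move/addrI <-.
  by rewrite !mulmxA.
have key : ev phi3 u12 * ev phi12 u3 =
   (ev phi3 u1 - ev phi3 u2 * ev phi2 u1) * (ev phi1 u3 + ev phi1 u2 * ev phi2 u3).
  have E1 : (phi3 *m u12) *m (phi12 *m u3) = (phi3 *m T *m u1) *m (phi1 *m s2 *m u3).
    by rewrite !mulmxA -(mulmxA phi3 u12 phi12) Huf !mulmxA.
  have E2 : phi3 *m T *m u1 = phi3 *m u1 - (phi3 *m u2) *m (phi2 *m u1).
    by rewrite /T mulmxBr mulmx1 mulmxBl !mulmxA.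
  have E3 : phi1 *m s2 *m u3 = phi1 *m u3 + (phi1 *m u2) *m (phi2 *m u3).
    by rewrite e2 mulmxDr mulmx1 mulmxDl !mulmxA.
  rewrite /ev -m11M E1 m11M E2 E3.
  by rewrite m11B m11D !m11M.
rewrite /w2 /w3 key.
ring.
Qed.
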